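(* Let $\Phi(x,y)$ be a standard symmetric polynomial of partial degree $d$ and let $H$ be a finite, connected, $d$-regular graph that is strongly $\Phi$-polynomial. Then $G(\Phi)^*$ is vertex-transitive. In particular, $H$ is vertex-transitive.
   Context: For symmetric $\Phi(x,y)\in\mathbb{C}[x,y]$ of partial degree $d$ (degree $d$ in $y$), $G(\Phi)$ has vertex set $\mathbb{C}$, the neighbours of $u$ being the roots of $\Phi(u,y)$ (edges = points of $\mathbb{V}(\Phi)$). A component is singular if it contains a loop ($\Phi(u,u)=0$), a multiple edge (multiple root of $\Phi(u,y)$) or a defective vertex (leading coefficient in $y$ of $\Phi(u,y)$ vanishes). $\Phi$ is standard if it is squarefree, $\Phi(x,x)\not\equiv 0$, and $\Phi$ has no nonconstant factor depending only on $x$ (or only on $y$); $G(\Phi)^*$ is $G(\Phi)$ with its finitely many singular components removed. $H$ is $\Phi$-polynomial if it is isomorphic to some component of $G(\Phi)^*$, and strongly $\Phi$-polynomial if it is isomorphic to every component of $G(\Phi)^*$. *)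

(* Defs.v *)
(* The complex numbers are modelled as R[i] for an arbitrary
   R : realType (every realType is the real line, up to isomorphism). *)
From HB Require Import structures.
From mathcomp Require Import all_boot all_order all_algebra.
From mathcomp Require Import fingroup perm reals complex.
From Stdlib Require Import Relation_Operators.
Set Implicit Arguments.
Unset Strict Implicit.
Unset Printing Implicit Defensive.
Import Order.TTheory GRing.Theory Num.Theory.
Local Open Scope ring_scope.

Section PhiGraph.
Variable R : realType.
Local Notation C := (R[i]).

(* A bivariate polynomial Phi(x,y) is an element of {poly {poly C}}:
   the outer variable is y, the coefficients are polynomials in x. *)

Definition specX (Phi : {poly {poly C}}) (u : C) : {poly C} :=
  map_poly (fun q : {poly C} => q.[u]) Phi.

Definition evalXY (Phi : {poly {poly C}}) (u v : C) : C := (specX Phi u).[v].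

Definition symmetricXY (Phi : {poly {poly C}}) : Prop := swapXY Phi = Phi.

Definition partial_degree (Phi : {poly {poly C}}) (d : nat) : Prop :=
  size Phi = d.+1.

Definition divXY (q Phi : {poly {poly C}}) : Prop := exists r, Phi = q * r.

Definition squarefreeXY (Phi : {poly {poly C}}) : Prop :=
  forall q : {poly {poly C}}, divXY (q * q) Phi -> q \is a GRing.unit.

Definition standard (Phi : {poly {poly C}}) : Prop :=
  [/\ squarefreeXY Phi,
      Phi.['X] != 0,   (* Phi(x,x) is not identically 0 *)
      (forall q : {poly C}, divXY q%:P Phi -> (size q <= 1)%N)  (* no factor in x only *)
    & (forall q : {poly C}, divXY (q ^:P) Phi -> (size q <= 1)%N) (* no factor in y only *)].

Definition adjG (Phi : {poly {poly C}}) (u v : C) : Prop := evalXY Phi u v = 0.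

Definition reachG (Phi : {poly {poly C}}) : C -> C -> Prop :=
  clos_refl_trans C (adjG Phi).

(* loop, multiple edge, or defective vertex at u *)
Definition singular_vertex (Phi : {poly {poly C}}) (u : C) : Prop :=
  [\/ evalXY Phi u u = 0,
      (exists v : C, (('X - v%:P) ^+ 2 %| specX Phi u)%R)
    | (lead_coef Phi).[u] = 0].

Definition singular_comp (Phi : {poly {poly C}}) (u : C) : Prop :=
  exists w, reachG Phi u w /\ singular_vertex Phi w.

Definition Gstar_vertex (Phi : {poly {poly C}}) (u : C) : Prop :=
  ~ singular_comp Phi u.

Definition Gstar_automorphism (Phi : {poly {poly C}}) (f : C -> C) : Prop :=
  [/\ forall a, Gstar_vertex Phi a -> Gstar_vertex Phi (f a),
      forall a b, Gstar_vertex Phi a -> Gstar_vertex Phi b -> f a = f b -> a = b,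
      forall b, Gstar_vertex Phi b -> exists2 a, Gstar_vertex Phi a & f a = b
    & forall a b, Gstar_vertex Phi a -> Gstar_vertex Phi b ->
        (adjG Phi (f a) (f b) <-> adjG Phi a b)].

Definition Gstar_vertex_transitive (Phi : {poly {poly C}}) : Prop :=
  forall u v, Gstar_vertex Phi u -> Gstar_vertex Phi v ->
    exists f, Gstar_automorphism Phi f /\ f u = v.

Definition iso_to_component (T : finType) (e : rel T)
    (Phi : {poly {poly C}}) (u : C) : Prop :=
  exists f : T -> C,
    [/\ injective f,
        (forall v, reachG Phi u v <-> exists a, f a = v)
      & forall a b, e a b <-> adjG Phi (f a) (f b)].

Definition strongly_Phi_polynomial (T : finType) (e : rel T)
    (Phi : {poly {poly C}}) : Prop :=
  forall u, Gstar_vertex Phi u -> iso_to_component e Phi u.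

End PhiGraph.

Definition simple_graph (T : finType) (e : rel T) : Prop :=
  symmetric e /\ irreflexive e.

Definition connected_graph (T : finType) (e : rel T) : Prop :=
  (0 < #|T|)%N /\ forall x y, connect e x y.

Definition regular_graph (T : finType) (e : rel T) (d : nat) : Prop :=
  forall x, #|[set y | e x y]| = d.

Definition vertex_transitive (T : finType) (e : rel T) : Prop :=
  forall x y, exists s : {perm T}, (forall a b, e (s a) (s b) = e a b) /\ s x = y.

(* Main.v *)
Require Import Defs.
From HB Require Import structures.
From mathcomp Require Import all_boot all_order all_algebra.
From mathcomp Require Import reals complex.
From mathcomp Require Import all_field ring fingroup perm.
From mathcomp Require Import boolp classical_sets cardinality ereal measure lebesgue_measure.
From Stdlib Require Import Relation_Operators.
Set Implicit Arguments. Unset Strict Implicit. Unset Printing Implicit Defensive.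
Import Order.TTheory GRing.Theory Num.Theory.
Local Open Scope ring_scope.

(* The reals are uncountable: a countable set has Lebesgue measure zero. *)
Section Unc.
Local Open Scope classical_set_scope.
Lemma R_uncountable (R : realType) (f : nat -> R) : exists x : R, forall k, f k != x.
Proof.
move=> //=; apply: contrapT => H.
have HA : range f = [set: R].
  apply/seteqP; split => // x _.
  apply: contrapT => nx; apply: H; exists x => k; apply/eqP => fk; apply: nx.
  by exists k.
have c : countable (range f) by exact: card_image_le.
have := countable_lebesgue_measure0 c.
rewrite HA => h.
have : (lebesgue_measure (`[0%R, 1%R]%classic : set R) <= lebesgue_measure [set: R])%E.
  apply: le_measure; rewrite ?inE //; exact: measurable_itv.
rewrite h lebesgue_measure_itv /= lte01 oppr0 adde0.
by rewrite lee_fin ler10.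
Qed.
End Unc.

Section Definable.
Variable F : closedFieldType.

Definition cofin (P : F -> Prop) :=
  exists s : seq F, (forall x, x \notin s -> P x) \/ (forall x, x \notin s -> ~ P x).

Lemma roots_seq (p : {poly F}) : p != 0 -> exists s : seq F, forall x, root p x -> x \in s.
Proof.
move=> p0; have [r Hr] := closed_field_poly_normal p.
exists r => x; rewrite Hr rootZ ?lead_coef_eq0 //.
by rewrite root_prod_XsubC.
Qed.

Lemma rterm_poly (t : GRing.term F) : GRing.rterm t ->
  exists p : {poly F}, forall x, GRing.eval [:: x] t = p.[x].
Proof.
elim: t => /=.
- case=> [|i] _; first by exists 'X => x; rewrite hornerX.
  by exists 0 => x; rewrite horner0 /= nth_nil.
- by move=> c _; exists c%:P => x; rewrite hornerC.
- by move=> n _; exists n%:R => x; rewrite -polyC_natr hornerC.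
- move=> t1 IH1 t2 IH2 /andP[/IH1 [p1 h1] /IH2 [p2 h2]].
  by exists (p1 + p2) => x; rewrite hornerD h1 h2.
- by move=> t1 IH1 /IH1 [p1 h1]; exists (- p1) => x; rewrite hornerN h1.
- by move=> t1 IH1 n /IH1 [p1 h1]; exists (p1 *+ n) => x; rewrite hornerMn h1.
- move=> t1 IH1 t2 IH2 /andP[/IH1 [p1 h1] /IH2 [p2 h2]].
  by exists (p1 * p2) => x; rewrite hornerM h1 h2.
- by [].
- by move=> t1 IH1 n /IH1 [p1 h1]; exists (p1 ^+ n) => x; rewrite horner_exp h1.
Qed.

Lemma qf_cofin (f : GRing.formula F) : GRing.qf_form f -> GRing.rformula f ->
  cofin (fun x => GRing.qf_eval [:: x] f).
Proof.
elim: f => //=.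
- by move=> b _ _; exists [::]; case: b; [left|right].
- move=> t1 t2 _ /andP[/rterm_poly [p1 h1] /rterm_poly [p2 h2]].
  have [e0|ne0] := eqVneq (p1 - p2) 0.
    exists [::]; left => x _; rewrite h1 h2; apply/eqP.
    by move/eqP: e0; rewrite subr_eq0 => /eqP ->.
  have [s Hs] := roots_seq ne0; exists s; right => x xs; rewrite h1 h2 => /eqP e.
  by move: xs; rewrite (Hs x) // /root hornerD hornerN e subrr.
- move=> f1 IH1 f2 IH2 /andP[q1 q2] /andP[r1 r2].
  have [s1 H1] := IH1 q1 r1; have [s2 H2] := IH2 q2 r2; exists (s1 ++ s2).
  have m x : x \notin s1 ++ s2 -> x \notin s1 /\ x \notin s2.
    by rewrite mem_cat negb_or => /andP.
  case: H1 => H1; last by right => x /m [/H1 ? _] /andP[].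
  case: H2 => H2; last by right => x /m [_ /H2 ?] /andP[].
  by left => x /m [/H1 -> /H2 ->].
- move=> f1 IH1 f2 IH2 /andP[q1 q2] /andP[r1 r2].
  have [s1 H1] := IH1 q1 r1; have [s2 H2] := IH2 q2 r2; exists (s1 ++ s2).
  have m x : x \notin s1 ++ s2 -> x \notin s1 /\ x \notin s2.
    by rewrite mem_cat negb_or => /andP.
  case: H1 => H1; first by left => x /m [/H1 -> _].
  case: H2 => H2; first by left => x /m [_ /H2 ->]; rewrite orbT.
  by right => x /m [/H1 a /H2 b] /orP[].
- move=> f1 IH1 f2 IH2 /andP[q1 q2] /andP[r1 r2].
  have [s1 H1] := IH1 q1 r1; have [s2 H2] := IH2 q2 r2; exists (s1 ++ s2).
  have m x : x \notin s1 ++ s2 -> x \notin s1 /\ x \notin s2.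
    by rewrite mem_cat negb_or => /andP.
  case: H1 => H1; last by left => x /m [/H1 /negP /negbTE -> _].
  case: H2 => H2; first by left => x /m [_ /H2 ->]; rewrite implybT.
  by right => x /m [/H1 a /H2 b]; rewrite a => /= /b.
- move=> f1 IH1 q1 r1; have [s1 H1] := IH1 q1 r1; exists s1.
  by case: H1 => H1; [right => x /H1 -> | left => x /H1 /negP].
Qed.

Lemma formula_cofin (f : GRing.formula F) : cofin (fun x => GRing.holds [:: x] f).
Proof.
have rf := GRing.to_rform_rformula f.
have /andP[qf rq] := GRing.quantifier_elim_wf (@ClosedFieldQE.wf_ex_elim F) rf.
have [s H] := qf_cofin qf rq.
have E x : GRing.holds [:: x] f <-> GRing.qf_eval [:: x]
   (GRing.quantifier_elim (@ClosedFieldQE.ex_elim F) (GRing.to_rform f)).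
  have P := GRing.quantifier_elim_rformP (@ClosedFieldQE.wf_ex_elim F)
      (ClosedFieldQE.holds_ex_elim (@solve_monicpoly F)) [:: x] rf.
  split.
    by move/GRing.to_rformP/P.
  by move/P/GRing.to_rformP.
exists s; case: H => H; [left => x /H /E // | right => x /H Hn /E; exact: Hn].
Qed.
End Definable.

Section Alg.
Variable R : realType.
Local Notation C := (R[i]).
Implicit Types (Phi P H : {poly {poly C}}).

Lemma specXE Phi u : specX Phi u = map_poly (horner_eval u) Phi.
Proof. by []. Qed.

Lemma adj_sym Phi u v : symmetricXY Phi -> evalXY Phi u v = evalXY Phi v u.
Proof.
move=> sym; rewrite /evalXY !specXE -!horner_swapXY sym.
by rewrite -[Phi in RHS]sym horner2_swapXY.
Qed.

Lemma specX_rmorphM Phi P u : specX (Phi * P) u = specX Phi u * specX P u.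
Proof. by rewrite !specXE rmorphM. Qed.

Lemma specX0_factor P w : specX P w = 0 ->
  exists P1, P = ('X - w%:P)%:P * P1 /\ size P1 = size P.
Proof.
move=> h; set q := 'X - w%:P.
have qn0 : q != 0 by rewrite polyXsubC_eq0.
pose P1 := map_poly (fun c => c %/ q) P.
have E : P = q%:P * P1.
  apply/polyP => i; rewrite coefCM coef_map_id0 ?div0p //.
  have ri : root P`_i w.
    move/polyP: h => /(_ i); rewrite specXE coef_map /= coef0 => hi.
    exact/eqP.
  by rewrite mulrC divpK // dvdp_XsubCl.
exists P1; split => //.
by rewrite [in RHS]E size_Cmul // polyC_eq0.
Qed.

Lemma specX_neq0 Phi w : standard Phi -> specX Phi w != 0.
Proof.
case=> _ _ nox _; apply/negP => /eqP /specX0_factor [P1 [E _]].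
have : (size (('X - w%:P)%R : {poly C}) <= 1)%N by apply: nox; exists P1.
by rewrite size_XsubC.
Qed.

Lemma unit_polyC (a : {poly C}) : size a = 1%N -> a%:P \is a GRing.unit.
Proof.
move=> sa; have a0 : a`_0 != 0.
  have : lead_coef a != 0 by rewrite lead_coef_eq0 -size_poly_eq0 sa.
  by rewrite lead_coefE sa.
rewrite poly_unitE size_polyC coefC /= poly_unitE sa eqxx /= unitfE a0 andbT.
by rewrite -size_poly_eq0 sa.
Qed.

Lemma gauss_lite Phi : forall n (a : {poly C}) P H, (size a <= n)%N -> a != 0 ->
  a%:P * Phi = P * P * H -> (1 < size P)%N ->
  exists Q : {poly {poly C}}, (1 < size Q)%N /\ divXY (Q * Q) Phi.
Proof.
elim=> [|n IH] a P H sa an0 E sP.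
  by move: an0; rewrite -size_poly_eq0; move: sa; rewrite leqn0 => /eqP ->.
have [sa1|sa1] := eqVneq (size a) 1%N.
  have ua := unit_polyC sa1.
  exists P; split => //; exists (H * (a%:P)^-1).
  by rewrite -[LHS](mulKr ua) E [in LHS]mulrC [RHS]mulrA.
have [w rw] := closed_rootP _ sa1.
have [a' Ea] := factor_theorem _ _ rw.
have a'0 : a' != 0 by apply: contraNneq an0; rewrite Ea => ->; rewrite mul0r.
have sa' : (size a' <= n)%N.
  move: sa; rewrite Ea size_Mmonic ?monicXsubC // size_XsubC addn2 /=.
  by [].
set q := 'X - w%:P.
have qn0 : q%:P != 0 :> {poly {poly C}} by rewrite polyC_eq0 polyXsubC_eq0.
have hs : specX P w * specX P w * specX H w = 0.
  rewrite -!specX_rmorphM -E specX_rmorphM specXE map_polyC /= .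
  by rewrite /horner_eval (rootP rw) mul0r.
move/eqP: hs; rewrite !mulf_eq0 orbb => /orP [] /eqP hs.
  have [P1 [EP sP1]] := specX0_factor hs.
  apply: (IH a' P1 (q%:P * H)) => //; last by rewrite sP1.
  apply: (mulfI qn0).
  transitivity (a%:P * Phi); first by rewrite Ea polyCM /q; ring.
  by rewrite E EP /q; ring.
have [H1 [EH _]] := specX0_factor hs.
apply: (IH a' P H1) => //.
apply: (mulfI qn0).
transitivity (a%:P * Phi); first by rewrite Ea polyCM /q; ring.
by rewrite E EH /q; ring.
Qed.

Lemma no_square Phi (u : {poly {poly C}}) : standard Phi -> size u != 1%N ->
  ~~ (Pdiv.Idomain.dvdp (u ^+ 2) Phi).
Proof.
move=> st su; apply/negP => hd.
have Phi0 : Phi != 0.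
  by case: st => _ + _ _; apply: contraNneq => ->; rewrite horner0.
have u0 : u != 0.
  by apply: contraNneq Phi0 => u0; move: hd; rewrite u0 expr0n /= Pdiv.Idomain.dvd0p.
have su1 : (1 < size u)%N.
  by move: su u0; rewrite -size_poly_eq0; case: (size u) => [|[|]].
move: hd; rewrite Pdiv.Idomain.dvdp_eq => /eqP E.
set c := _ ^+ _ in E.
have c0 : c != 0 by apply: Pdiv.Idomain.lc_expn_scalp_neq0.
have [Q [sQ [r Er]]] : exists Q : {poly {poly C}}, (1 < size Q)%N /\ divXY (Q * Q) Phi.
  apply: (@gauss_lite Phi (size c) c u (Pdiv.Idomain.divp Phi (u ^+ 2))) => //.
  by rewrite mul_polyC E mulrC expr2.
case: st => sq _ _ _.
have : Q \is a GRing.unit by apply: sq; exists r.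
by rewrite poly_unitE => /andP [/eqP sQ1 _]; move: sQ; rewrite sQ1.
Qed.

Lemma disc_neq0 Phi : standard Phi -> resultant Phi Phi^`() != 0.
Proof.
move=> st; apply/negP; rewrite resultant_eq0 => hg.
have : separable_poly Phi.
  apply/separable_polyP; split.
    apply/poly_square_freeP => u su; exact: no_square.
  move=> u _ su; apply/negP => /eqP d0.
  have : u^`()`_((size u).-2) != 0.
    rewrite coef_deriv.
    have -> : ((size u).-2.+1 = (size u).-1)%N by case: (size u) su => [|[|]].
    rewrite -lead_coefE -mulr_natr mulf_eq0 negb_or lead_coef_eq0.
    rewrite -size_poly_eq0 -(ltn_predK su) /= -polyC_natr polyC_eq0 pnatr_eq0.
    by case: (size u) su => [|[|]].
  by rewrite d0 coef0 eqxx.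
by rewrite unlock /coprimep gtn_eqF.
Qed.

Lemma lead_coef_atPP (R0 : nzRingType) (p : {poly R0}) k : p`_k != 0 -> (size p <= k.+1)%N -> lead_coef p = p`_k.
Proof.
move=> pk sp; have kp : (k < size p)%N.
  by rewrite ltnNge; apply: contra pk => h; rewrite nth_default.
rewrite lead_coefE.
have -> : size p = k.+1 by apply/eqP; rewrite eqn_leq sp kp.
by [].
Qed.

Lemma mult_edge_disc Phi u v : (lead_coef Phi).[u] != 0 ->
  (('X - v%:P) ^+ 2 %| specX Phi u) -> (resultant Phi Phi^`()).[u] = 0.
Proof.
move=> lc hd.
set p := specX Phi u.
have sp : size p = size Phi by rewrite /p specXE size_map_poly_id0.
have p0 : p != 0 by rewrite -size_poly_eq0 sp size_poly_eq0 -lead_coef_eq0;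
  apply: contraNneq lc => ->; rewrite horner0.
have s3 : (3 <= size Phi)%N.
  by rewrite -sp; have := dvdp_leq p0 hd; rewrite size_exp_XsubC.
set m := (size Phi).-1.
have Em : size Phi = m.+1 by rewrite /m prednK // (leq_trans _ s3).
have cm : (Phi^`()`_m.-1).[u] != 0.
  rewrite coef_deriv prednK ?hornerMn; last by rewrite -ltnS -Em (leq_trans _ s3).
  by rewrite mulrn_eq0 negb_or /m -lead_coefE lc andbT -lt0n -ltnS -Em (leq_trans _ s3).
have ld : lead_coef Phi^`() = Phi^`()`_m.-1.
  apply: lead_coef_atPP; first by apply: contraNneq cm => ->; rewrite horner0.
  rewrite prednK; last by rewrite -ltnS -Em (leq_trans _ s3).
  by rewrite -ltnS -Em lt_size_deriv // -size_poly_eq0 Em.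
have := @map_resultant _ _ (horner_eval u) Phi Phi^`() lc.
rewrite ld => /(_ cm) /= E.
have -> : (resultant Phi Phi^`()).[u] = horner_eval u (resultant Phi Phi^`()) by [].
rewrite E.
apply/eqP; rewrite resultant_eq0 -deriv_map -/(specX Phi u) -/p.
have d1 : ('X - v%:P) %| p by apply: dvdp_trans hd; rewrite dvdp_exp.
have d2 : ('X - v%:P) %| p^`().
  move: hd => /dvdpP [r Er]; rewrite /p Er derivM expr2 derivM derivXsubC mul1r mulr1.
  by rewrite dvdp_add // dvdp_mull // ?dvdp_mulr // dvdp_add.
have g0 : gcdp p p^`() != 0 by rewrite gcdp_eq0 negb_and p0.
have := dvdp_leq g0 (_ : ('X - v%:P) %| gcdp p p^`()).
by rewrite size_XsubC dvdp_gcd d1 d2 => /(_ isT).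
Qed.
Lemma loop_root Phi w : evalXY Phi w w = 0 -> root Phi.['X] w.
Proof.
move=> h; apply/eqP; have := horner_map (horner_eval w) Phi 'X.
by rewrite /= /horner_eval hornerX => <-.
Qed.

Lemma sing_finite Phi : standard Phi ->
  exists S : seq C, forall w, singular_vertex Phi w -> w \in S.
Proof.
move=> st; have st' := st; case: st' => _ nX _ _.
have Phi0 : Phi != 0 by apply: contraNneq nX => ->; rewrite horner0.
have [S1 H1] := roots_seq nX.
have lc0 : lead_coef Phi != 0 by rewrite lead_coef_eq0.
have [S2 H2] := roots_seq lc0.
have [S3 H3] := roots_seq (disc_neq0 st).
exists (S1 ++ S2 ++ S3) => w [/loop_root/H1 h|[v hv]|/eqP h].
- by rewrite mem_cat h.
- have [lc|lc] := eqVneq (lead_coef Phi).[w] 0.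
    by rewrite !mem_cat H2 ?orbT //; apply/eqP.
  by rewrite !mem_cat H3 ?orbT //; apply/eqP; exact: mult_edge_disc hv.
- by rewrite !mem_cat H2 ?orbT.
Qed.

Lemma reach_sym Phi u v : symmetricXY Phi -> reachG Phi u v -> reachG Phi v u.
Proof.
move=> sym; elim=> [x y h|x|x y z _ h1 _ h2].
- by apply: rt_step; rewrite /adjG adj_sym.
- exact: rt_refl.
- exact: rt_trans h2 h1.
Qed.

Section Large.
Variable Phi : {poly {poly C}}.
Hypothesis st : standard Phi.
Hypothesis sym : symmetricXY Phi.

Definition nbrs w : seq C := sval (closed_field_poly_normal (specX Phi w)).

Lemma nbrsP w v : adjG Phi w v -> v \in nbrs w.
Proof.
rewrite /adjG /evalXY /nbrs => h.
case: (closed_field_poly_normal (specX Phi w)) h => r /= E.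
rewrite E hornerZ => /eqP; rewrite mulf_eq0 lead_coef_eq0 (negbTE (specX_neq0 _ st)) /=.
by move/eqP/rootP; rewrite root_prod_XsubC.
Qed.

Fixpoint NN (L : seq C) k : seq C :=
  if k is k'.+1 then NN L k' ++ flatten (map nbrs (NN L k')) else L.

Lemma reach_NN L w u : reachG Phi w u -> forall k, w \in NN L k -> exists k', u \in NN L k'.
Proof.
elim=> [x y h|x|x y z _ h1 _ h2] k hk.
- exists k.+1; rewrite /= mem_cat; apply/orP; right.
  by apply/flatten_mapP; exists x => //; apply: nbrsP.
- by exists k.
- by have [k1 hk1] := h1 k hk; exact: h2 hk1.
Qed.

Hypothesis unc : forall f : nat -> C, exists x, forall k, f k != x.

Lemma large (s : seq C) : exists u, Gstar_vertex Phi u /\ forall w, reachG Phi u w -> w \notin s.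
Proof.
have [S HS] := sing_finite st.
set L := s ++ S.
pose f m := if @unpickle (nat * nat)%type m is Some (k, j) then nth 0 (NN L k) j else 0.
have [x Hx] := unc f.
have notin : forall w, w \in L -> ~ reachG Phi w x.
  move=> w wL rw; have [k hk] := reach_NN rw (k := 0) wL.
  have := Hx (pickle (k, index x (NN L k))).
  by rewrite /f pickleK nth_index // eqxx.
exists x; split.
  move=> [w [rw sw]]; apply: (notin w); last exact: reach_sym.
  by rewrite mem_cat HS ?orbT.
move=> w rw; apply/negP => ws; apply: (notin w); last exact: reach_sym.
by rewrite mem_cat ws.
Qed.
End Large.

End Alg.
Section Form.
Variable R : realType.
Local Notation C := (R[i]).
Local Notation term := (GRing.term C).
Local Notation formula := (GRing.formula C).

Fixpoint termP (s : seq C) (t : term) : term :=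
  if s is a :: s' then GRing.Add (GRing.Mul (termP s' t) t) (GRing.Const a)
  else GRing.Const 0.

Lemma eval_termP e s t : GRing.eval e (termP s t) = horner_rec s (GRing.eval e t).
Proof. by elim: s => //= a s ->. Qed.

Fixpoint termXY (s : seq {poly C}) (tu tv : term) : term :=
  if s is q :: s' then GRing.Add (GRing.Mul (termXY s' tu tv) tv) (termP q tu)
  else GRing.Const 0.

Lemma eval_termXY e (Phi : {poly {poly C}}) tu tv :
  GRing.eval e (termXY Phi tu tv) = evalXY Phi (GRing.eval e tu) (GRing.eval e tv).
Proof.
rewrite /evalXY /specX map_polyE horner_Poly.
elim: (polyseq Phi) => //= q s ->.
by rewrite eval_termP.
Qed.

Definition andF (l : seq formula) := foldr (@GRing.And C) (GRing.Bool true) l.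
Definition orF (l : seq formula) := foldr (@GRing.Or C) (GRing.Bool false) l.

Lemma holds_andF e (s : seq nat) (g : nat -> formula) :
  GRing.holds e (andF (map g s)) <-> (forall i, i \in s -> GRing.holds e (g i)).
Proof.
elim: s => [|i s IH] /=; first by split.
split.
  move=> [h1 /IH h2] j; rewrite in_cons => /orP [/eqP ->|] //; exact: h2.
move=> h; split; first by apply: h; rewrite mem_head.
by apply/IH => j js; apply: h; rewrite in_cons js orbT.
Qed.

Lemma holds_orF e (s : seq nat) (g : nat -> formula) :
  GRing.holds e (orF (map g s)) <-> (exists2 i, i \in s & GRing.holds e (g i)).
Proof.
elim: s => [|i s IH] /=; first by split => // [[]].
split.
  move=> [h|/IH [j js h]]; first by exists i; rewrite ?mem_head.
  by exists j; rewrite // in_cons js orbT.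
move=> [j]; rewrite in_cons => /orP [/eqP ->|js] h; first by left.
by right; apply/IH; exists j.
Qed.

Lemma set_nth_size (e : seq C) y : set_nth 0 e (size e) y = rcons e y.
Proof. by elim: e => //= a e ->. Qed.

Lemma holds_exn k : forall m (e : seq C) (f : formula), size e = m ->
  (GRing.holds e (foldr (fun i g => GRing.Exists i g) f (iota m k)) <->
   exists s, size s = k /\ GRing.holds (e ++ s) f).
Proof.
elim: k => [|k IH] m e f se /=.
  split; first by move=> h; exists [::]; rewrite cats0.
  by move=> [s [ss hs]]; case: s ss hs => // _; rewrite cats0.
split.
  move=> [y]; rewrite -se set_nth_size.
  have sr : size (rcons e y) = (size e).+1 by rewrite size_rcons.
  move/(IH _ _ _ sr) => [s [ss hs]].
  by exists (y :: s); split; rewrite /= ?ss // -cat_rcons.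
move=> [[|y s] [ss hs]] //; case: ss => ss; exists y; rewrite -se set_nth_size.
have sr : size (rcons e y) = (size e).+1 by rewrite size_rcons.
apply/(IH _ _ _ sr).
by exists s; rewrite cat_rcons.
Qed.


Section FormT.
Variable Phi : {poly {poly C}}.
Variables (T : finType) (e : rel T).
Local Notation ts := (enum T).
Local Notation n := (size (enum T)).
Local Notation V := (@GRing.Var C).

Definition EqZ (tu tv : term) : formula := GRing.Equal (termXY Phi tu tv) (GRing.Const 0).

Definition bodyF (a : T) : formula :=
  GRing.And (GRing.Equal (V (index a ts).+1) (V 0))
 (GRing.And (andF [seq andF [seq (if e (nth a ts i) (nth a ts j) then EqZ (V i.+1) (V j.+1)
                    else GRing.Not (EqZ (V i.+1) (V j.+1))) | j <- iota 0 n] | i <- iota 0 n])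
 (GRing.And (andF [seq andF [seq (if i == j then GRing.Bool true
                    else GRing.Not (GRing.Equal (V i.+1) (V j.+1))) | j <- iota 0 n] | i <- iota 0 n])
   (GRing.Forall n.+1 (andF [seq GRing.Implies (EqZ (V i.+1) (V n.+1))
        (orF [seq GRing.Equal (V n.+1) (V j.+1) | j <- iota 0 n]) | i <- iota 0 n])))).

Definition Fa (a : T) : formula := foldr (fun i g => GRing.Exists i g) (bodyF a) (iota 1 n).

Definition Kp (a : T) (x : C) := exists g : T -> C,
  [/\ injective g, g a = x, (forall b c, e b c <-> adjG Phi (g b) (g c))
    & (forall b z, adjG Phi (g b) z -> exists c, g c = z)].

Lemma index_lt (b : T) : (index b ts < n)%N.
Proof. by rewrite index_mem mem_enum. Qed.

Lemma nth_idx (a b : T) : nth a ts (index b ts) = b.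
Proof. by rewrite nth_index // mem_enum. Qed.

Lemma idx_nth (a : T) i : (i < n)%N -> index (nth a ts i) ts = i.
Proof. by move=> hi; rewrite index_uniq // enum_uniq. Qed.

Lemma Fa_K a x : GRing.holds [:: x] (Fa a) <-> Kp a x.
Proof.
have HE := @holds_exn n 1%N [:: x] (bodyF a) (erefl _).
rewrite /Fa; split.
  move/HE=> [ys [sy /= [hr [hadj [hdist hcl]]]]].
  pose g b := nth 0 ys (index b ts).
  have mi i : (i \in iota 0 n) = (i < n)%N by rewrite mem_iota.
  have imem b : index b ts \in iota 0 n by rewrite mi index_lt.
  move/holds_andF: hadj => hadj; move/holds_andF: hdist => hdist.
  have Hadj b c : e b c <-> adjG Phi (g b) (g c).
    have := hadj _ (imem b).
    move/holds_andF => /(_ _ (imem c)).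
    rewrite !nth_idx; case: (e b c) => /=; rewrite /EqZ /= eval_termXY /=.
      by [].
    by move=> hn; split => // /hn.
  exists g; split => //.
  - move=> b c gbc; apply/eqP; rewrite -(nth_idx b b) -(nth_idx b c); apply/eqP.
    congr nth; apply/eqP; apply: contraT => nbc.
    have := hdist _ (imem b).
    move/holds_andF => /(_ _ (imem c)).
    by rewrite (negbTE nbc) /=; move/(_ gbc).
  - move=> b z hz; have := hcl z; rewrite -{1}sy set_nth_size.
    move/holds_andF => /(_ _ (imem b)) /=; rewrite /EqZ /= eval_termXY /=.
    rewrite !nth_rcons sy index_lt ltnn eqxx => /(_ hz) /holds_orF [j].
    rewrite mi => jn /=; rewrite !nth_rcons sy jn ltnn eqxx => ->.
    by exists (nth a ts j); rewrite /g idx_nth.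
move=> [g [ginj ga Hadj Hcl]]; apply/HE; exists (map g ts); split.
  by rewrite size_map.
have mi i : (i \in iota 0 n) = (i < n)%N by rewrite mem_iota.
rewrite /= /bodyF; split.
  by rewrite /= (nth_map a) ?index_lt // nth_idx.
split.
  apply/holds_andF => i; rewrite mi => hi; apply/holds_andF => j; rewrite mi => hj.
  case he: (e (nth a ts i) (nth a ts j)) => /=; rewrite /EqZ /= eval_termXY /=;
    rewrite !enumT in hi hj he *; rewrite !(nth_map a) //.
    by apply/Hadj; rewrite he.
  by move/Hadj; rewrite he.
split.
  apply/holds_andF => i; rewrite mi => hi; apply/holds_andF => j; rewrite mi => hj.
  case: eqP => // nij /=; rewrite !enumT in hi hj *; rewrite !(nth_map a) // => /ginj /eqP.
  rewrite nth_uniq //; last by rewrite -enumT enum_uniq.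
  by move/eqP.
move=> z.
have -> : set_nth 0 (map g ts) n z = rcons (map g ts) z.
  by rewrite -(size_map g) set_nth_size.
apply/holds_andF => i; rewrite mi => hi /=; rewrite /EqZ /= eval_termXY /=.
rewrite !nth_rcons size_map hi ltnn eqxx (nth_map a) // => hz.
have [c gc] := Hcl _ _ hz.
apply/holds_orF; exists (index c ts); first by rewrite mi index_lt.
by rewrite /= !nth_rcons size_map index_lt ltnn eqxx (nth_map a) ?index_lt // nth_idx gc.
Qed.

End FormT.
End Form.

Section Swap.
Variable R : realType.
Local Notation C := (R[i]).
Variable Phi : {poly {poly C}}.
Variables (T : finType) (t0 : T).

Definition inim (p : T -> C) x := [exists t, p t == x].
Definition pinv (p : T -> C) x := odflt t0 [pick t | p t == x].

Lemma pinvK p x : inim p x -> p (pinv p x) = x.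
Proof.
move=> /existsP [t /eqP pt]; rewrite /pinv; case: pickP => [t' /eqP //|/(_ t)].
by rewrite pt eqxx.
Qed.

Lemma pinvE p t : injective p -> pinv p (p t) = t.
Proof. by move=> pinj; apply: pinj; rewrite pinvK //; apply/existsP; exists t. Qed.

Lemma inim_p p t : inim p (p t).
Proof. by apply/existsP; exists t. Qed.

Definition swapF (p q : T -> C) x :=
  if inim p x then q (pinv p x) else if inim q x then p (pinv q x) else x.

Variables (p q : T -> C).
Hypotheses (pinj : injective p) (qinj : injective q).
Hypothesis adjsym : forall x y, adjG Phi x y -> adjG Phi y x.
Hypothesis clU : forall x y, adjG Phi x y -> inim p x = inim p y.
Hypothesis clV : forall x y, adjG Phi x y -> inim q x = inim q y.
Hypothesis ov : forall x, inim p x -> inim q x -> forall y, inim p y = inim q y.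
Hypothesis iso : forall s t, adjG Phi (p s) (p t) <-> adjG Phi (q s) (q t).
Hypothesis GU : forall x, inim p x -> Gstar_vertex Phi x.
Hypothesis GV : forall x, inim q x -> Gstar_vertex Phi x.

Lemma swapF_p t : swapF p q (p t) = q t.
Proof. by rewrite /swapF inim_p pinvE. Qed.

Lemma swapF_U x : inim p x -> inim q (swapF p q x).
Proof. by rewrite /swapF => ->; apply: inim_p. Qed.

Lemma swapF_V x : ~~ inim p x -> inim q x -> inim p (swapF p q x).
Proof. by rewrite /swapF => /negbTE -> ->; apply: inim_p. Qed.

Lemma swapF_N x : ~~ inim p x -> ~~ inim q x -> swapF p q x = x.
Proof. by rewrite /swapF => /negbTE -> /negbTE ->. Qed.

Lemma swapK x : swapF q p (swapF p q x) = x.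
Proof.
have [hp|hp] := boolP (inim p x).
  rewrite /swapF hp inim_p pinvE //; exact: pinvK.
have [hq|hq] := boolP (inim q x); last by rewrite /swapF !(negbTE hp) !(negbTE hq) /= ?(negbTE hp) ?(negbTE hq).
have hy := swapF_V hp hq.
have nq : ~~ inim q (swapF p q x).
  by apply/negP => hq'; move: hp; rewrite (ov hy hq' x) hq.
by rewrite /swapF (negbTE hp) hq in nq *; rewrite (negbTE nq) inim_p pinvE // pinvK.
Qed.

Lemma adj_both a b : inim p a -> inim p b -> (adjG Phi (swapF p q a) (swapF p q b) <-> adjG Phi a b).
Proof.
move=> ha hb; rewrite /swapF ha hb -iso !pinvK //.
Qed.

Lemma adj_U_notU a b : inim p a -> ~~ inim p b ->
  ~ adjG Phi a b /\ ~ adjG Phi (swapF p q a) (swapF p q b).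
Proof.
move=> ha hb; split; first by move/clU; rewrite ha (negbTE hb).
have ha' := swapF_U ha.
have [hq|hq] := boolP (inim q b).
  have hb' := swapF_V hb hq.
  move/clV; rewrite ha' => /esym hq'.
  by move: hb; rewrite (ov hb' hq' b) hq.
by rewrite (swapF_N hb hq) => /clV; rewrite ha' (negbTE hq).
Qed.

Lemma adj_V a b : ~~ inim p a -> inim q a -> ~~ inim p b ->
  (adjG Phi (swapF p q a) (swapF p q b) <-> adjG Phi a b).
Proof.
move=> hpa hqa hpb.
have [hqb|hqb] := boolP (inim q b).
  by rewrite /swapF (negbTE hpa) (negbTE hpb) hqa hqb iso !pinvK.
split.
  move/clU; rewrite (swapF_V hpa hqa) swapF_N // => /esym hpb'.
  by move: hpb; rewrite hpb'.
by move/clV; rewrite hqa (negbTE hqb).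
Qed.

Lemma swap_adj a b : adjG Phi (swapF p q a) (swapF p q b) <-> adjG Phi a b.
Proof.
have symm x y : adjG Phi x y <-> adjG Phi y x by split; apply: adjsym.
have [ha|ha] := boolP (inim p a).
  have [hb|hb] := boolP (inim p b); first exact: adj_both.
  by have [h1 h2] := adj_U_notU ha hb; split.
have [hb|hb] := boolP (inim p b).
  have [h1 h2] := adj_U_notU hb ha.
  by split => /adjsym.
have [hqa|hqa] := boolP (inim q a); first exact: adj_V.
have [hqb|hqb] := boolP (inim q b).
  by rewrite symm [adjG Phi a b]symm; apply: adj_V.
by rewrite !swapF_N.
Qed.

Lemma swapG x : Gstar_vertex Phi x -> Gstar_vertex Phi (swapF p q x).
Proof.
move=> hx; have [hp|hp] := boolP (inim p x); first exact/GV/swapF_U.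
have [hq|hq] := boolP (inim q x); first exact/GU/swapF_V.
by rewrite swapF_N.
Qed.

End Swap.

Section Main.
Variable R : realType.
Local Notation C := (R[i]).
Variable Phi : {poly {poly C}}.
Variables (T : finType) (e : rel T).
Hypotheses (st : standard Phi) (sym : symmetricXY Phi).
Hypothesis conn : connected_graph e.
Hypothesis strong : strongly_Phi_polynomial e Phi.
Hypothesis unc : forall f : nat -> C, exists x, forall k, f k != x.

Local Notation reach := (reachG Phi).

Lemma rtT x y z : reach x y -> reach y z -> reach x z.
Proof. exact: rt_trans. Qed.
Lemma rtS x y : adjG Phi x y -> reach x y.
Proof. exact: rt_step. Qed.
Lemma rtR x : reach x x.
Proof. exact: rt_refl. Qed.

Lemma adjsym x y : adjG Phi x y -> adjG Phi y x.
Proof. by rewrite /adjG adj_sym. Qed.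

Lemma reach_G u x : Gstar_vertex Phi u -> reach u x -> Gstar_vertex Phi x.
Proof. by move=> gu rx [w [rw sw]]; apply: gu; exists w; split => //; apply: rtT rw. Qed.

Lemma iso_K u f : [/\ injective f, (forall v, reach u v <-> exists a, f a = v)
      & forall a b, e a b <-> adjG Phi (f a) (f b)] -> forall b, Kp Phi e b (f b).
Proof.
move=> [finj fr fe] b; exists f; split => // c z hz.
apply/fr; apply: rtT (rtS hz).
by apply/fr; exists c.
Qed.

Lemma K_reach (g : T -> C) x : (forall b z, adjG Phi (g b) z -> exists c, g c = z) ->
  (exists b, g b = x) -> forall v, reach x v -> exists c, g c = v.
Proof.
move=> gcl hx v rxv; elim: rxv hx => [y z hyz|y|y z w _ h1 _ h2] hy //.
- by case: hy => b gb; apply: (gcl b); rewrite gb.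
- exact/h2/h1.
Qed.

Lemma K_conn (g : T -> C) a c : (forall b c, e b c <-> adjG Phi (g b) (g c)) -> reach (g a) (g c).
Proof.
move=> gadj; case: conn => _ /(_ a c) /connectP [pth].
elim: pth a => [|b pth IH] a /=; first by move=> _ ->; apply: rtR.
move=> /andP [eab pb] ec; apply: (rtT _ (IH b pb ec)).
by apply: rtS; apply/gadj.
Qed.

Lemma cofK c : exists s : seq C, forall x, x \notin s -> Kp Phi e c x.
Proof.
have [s [H|H]] := formula_cofin (Fa Phi e c).
  by exists s => x /H /Fa_K.
exfalso; have [u [Gu Hu]] := large st sym unc s.
have [f [finj fr fe]] := strong Gu.
have hK := iso_K (And3 finj fr fe) c.
apply: (H (f c)); last by apply/Fa_K.
by apply: Hu; apply/fr; exists c.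
Qed.

Lemma Htrans : vertex_transitive e.
Proof.
move=> a b.
have [sa Ha] := cofK a; have [sb Hb] := cofK b.
have [u [Gu Hu]] := large st sym unc (sa ++ sb).
have nu := Hu u (rtR _).
have [g [ginj ga gadj gcl]] : Kp Phi e a u by apply: Ha; apply: contra nu; rewrite mem_cat => ->.
have [h [hinj hb hadj hcl]] : Kp Phi e b u by apply: Hb; apply: contra nu; rewrite mem_cat orbC => ->.
have him t : exists c, h c = g t.
  apply: (K_reach hcl (ex_intro _ b hb)); rewrite -ga; exact: K_conn.
pose sg t := odflt a [pick c | h c == g t].
have hsg t : h (sg t) = g t.
  rewrite /sg; case: pickP => [c /eqP //|H].
  by have [c hc] := him t; move: (H c); rewrite hc eqxx.
have sginj : injective sg by move=> x y hxy; apply: ginj; rewrite -!hsg hxy.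
exists (perm sginj); split; last by apply: hinj; rewrite permE hsg ga hb.
move=> x y; rewrite !permE; apply/idP/idP => H.
  by apply/gadj; rewrite -!hsg; apply/hadj.
by apply/hadj; rewrite !hsg; apply/gadj.
Qed.

Lemma Gtrans : Gstar_vertex_transitive Phi.
Proof.
move=> u v Gu Gv.
have [fu [fuinj fur fue]] := strong Gu.
have [fv [fvinj fvr fve]] := strong Gv.
have [a0 ha0] : exists a0, fu a0 = u by apply/fur; exact: rtR.
have [b0 hb0] : exists b0, fv b0 = v by apply/fvr; exact: rtR.
have [s [se sa]] := Htrans a0 b0.
pose q t := fv (s t).
have qinj : injective q by move=> x y /fvinj /perm_inj.
have inU x : inim fu x <-> reach u x.
  split; first by move=> /existsP [t /eqP <-]; apply/fur; exists t.
  by move/fur => [t <-]; exact: inim_p.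
have inV x : inim q x <-> reach v x.
  split; first by move=> /existsP [t /eqP <-]; apply/fvr; exists (s t).
  by move/fvr => [t <-]; apply/existsP; exists (s^-1 t)%g; rewrite /q permKV.
have clgen (w : C) (P : C -> bool) : (forall x, P x <-> reach w x) ->
    forall x y, adjG Phi x y -> P x = P y.
  move=> HP x y hxy; apply/idP/idP => /HP h; apply/HP.
    exact: rtT h (rtS hxy).
  exact: rtT h (rtS (adjsym hxy)).
have clU := @clgen u (inim fu) inU; have clV := @clgen v (inim q) inV.
have ov x : inim fu x -> inim q x -> forall y, inim fu y = inim q y.
  move=> /(inU _) hux /(inV _) hvx y; apply/idP/idP.
    move=> /(inU _) h; apply/(inV _).
    exact: (rtT (rtT hvx (reach_sym sym hux)) h).
  move=> /(inV _) h; apply/(inU _).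
  exact: (rtT (rtT hux (reach_sym sym hvx)) h).
have ov' x : inim q x -> inim fu x -> forall y, inim q y = inim fu y.
  by move=> h1 h2 y; rewrite (ov x h2 h1).
have iso x y : adjG Phi (fu x) (fu y) <-> adjG Phi (q x) (q y).
  by rewrite -fue -fve se.
have iso' x y : adjG Phi (q x) (q y) <-> adjG Phi (fu x) (fu y).
  by rewrite iso.
have GU x : inim fu x -> Gstar_vertex Phi x by move/inU; apply: reach_G.
have GV x : inim q x -> Gstar_vertex Phi x by move/inV; apply: reach_G.
exists (swapF a0 fu q); split; last by rewrite -ha0 swapF_p // /q sa.
split.
- by move=> x; apply: swapG.
- by move=> x y _ _ /(congr1 (swapF a0 q fu)); rewrite !swapK.
- move=> y Gy; exists (swapF a0 q fu y); first by apply: swapG.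
  by rewrite swapK.
- by move=> x y _ _; exact: (swap_adj a0 (@adjsym) clU clV ov iso).
Qed.

End Main.

Lemma C_uncountable (R : realType) (f : nat -> R[i]) : exists x : R[i], forall k, f k != x.
Proof.
have [x0 Hx] := R_uncountable (fun k => complex.Re (f k)).
exists (complex.Complex x0 0) => k; apply/negP => /eqP fk.
by move: (Hx k); rewrite fk eqxx.
Qed.

Theorem mainTheorem6 (R : realType) (Phi : {poly {poly R[i]}}) (d : nat)
    (T : finType) (e : rel T) :
  standard Phi -> symmetricXY Phi -> partial_degree Phi d ->
  simple_graph e -> connected_graph e -> regular_graph e d ->
  strongly_Phi_polynomial e Phi ->
  Gstar_vertex_transitive Phi /\ vertex_transitive e.
Proof.
move=> st sym _ _ conn _ strong.
have unc := @C_uncountable R.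
split; [exact: (Gtrans st sym conn strong unc) | exact: (Htrans st sym conn strong unc)].
Qed.
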